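(* Let $X=\mathbb A^2$ with coordinates $x,y$, let $n,m$ be positive integers, $0<\lambda\leq1$, and $B=\lambda\cdot(x^m+y^n=0)$, and assume $(X,B)$ is lc. Then $$\mathrm{mld}(X\ni0,B)=\inf\{p_1+p_2-\min\{\lambda mp_1,\lambda np_2\}\mid (p_1,p_2)\in\mathbb N^2\}.$$
   Context: $\mathbb N$ is the set of positive integers. For a prime divisor $E$ over $X$ (on $Y$ with birational $g:Y\to X$, $K_Y+B_Y=g^*(K_X+B)$), $a(E,X,B)=1-\mathrm{mult}_EB_Y$; $\mathrm{mld}(X\ni0,B)=\inf a(E,X,B)$ over prime divisors $E$ over $X$ with center the origin $0$. $(X,B)$ lc means $a(E,X,B)\geq0$ for all prime divisors $E$ over $X$. *)

(* Defs.v *)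
From HB Require Import structures.
From mathcomp Require Import all_boot all_order all_algebra.
From mathcomp Require Import classical_sets boolp reals ereal.
Set Implicit Arguments. Unset Strict Implicit. Unset Printing Implicit Defensive.
Import Order.TTheory GRing.Theory Num.Theory.
Local Open Scope ring_scope.
Local Open Scope classical_set_scope.

(* Polynomials in two variables over F: {poly {poly F}}.
   The INNER variable is the first coordinate ("x", or "s" in a chart),
   the OUTER variable is the second coordinate ("y", or "t" in a chart). *)
Section Defs.
Variable F : fieldType.
Definition poly2 := {poly {poly F}}.
Definition xv : poly2 := ('X : {poly F})%:P.
Definition yv : poly2 := 'X.
Definition cst (c : F) : poly2 := c%:P%:P.

Definition eval2 (p P Q : poly2) : poly2 :=
  \sum_(i < size p) (\sum_(j < size p`_i) cst (p`_i)`_j * P ^+ j) * Q ^+ i.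

Definition pmap := (poly2 * poly2)%type.
Definition comp_pmap (psi : pmap) (P Q : poly2) : pmap :=
  (eval2 psi.1 P Q, eval2 psi.2 P Q).

Definition start (p : F * F) : pmap := (cst p.1 + xv, cst p.2 + yv).

(* psi : local coordinates (a,b) centred at the current centre P.
   Blowing up P gives the exceptional curve E_P ~ P^1; its points are
   Some c  (the point (0,c) of the chart a = a', b = a' b') and
   None    (the remaining point, origin of the chart a = a' b', b = b').
   [step psi o] gives local coordinates centred at that point of E_P. *)
Definition step (psi : pmap) (o : option F) : pmap :=
  match o with
  | Some c => comp_pmap psi xv (xv * (cst c + yv))
  | None => comp_pmap psi (xv * yv) yv
  end.

(* Every prime divisor over X with centre a closed point p is obtained by
   successively blowing up the centre: start at p, move along the centres
   listed in s, then blow up once more.  [chart p s] is the chart (s,t) of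
   the last blow-up in which the last exceptional divisor E is {s = 0}. *)
Definition centre_coords (p : F * F) (s : seq (option F)) : pmap :=
  foldl step (start p) s.
Definition chart (p : F * F) (s : seq (option F)) : pmap :=
  comp_pmap (centre_coords p s) xv (xv * yv).

Definition dx (q : poly2) : poly2 := map_poly (@deriv F) q.
Definition dy (q : poly2) : poly2 := deriv q.
Definition jac (Phi : pmap) : poly2 :=
  dx Phi.1 * dy Phi.2 - dy Phi.1 * dx Phi.2.

(* order of vanishing along {x = 0} (the largest k with x^k | q) *)
Definition coefx (q : poly2) (i : nat) : {poly F} := q`_i.
Definition ordx (q : poly2) : nat :=
  \max_(k < (\max_(i < size q) size (coefx q i)).+1 |
        [forall i : 'I_(size q), dvdp 'X^k (coefx q i)]) k.

Definition fmn (m n : nat) : poly2 := xv ^+ m + yv ^+ n.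

Definition irreducible2 (g : poly2) : Prop :=
  g != 0 /\ g \isn't a GRing.unit /\
  forall a b : poly2, g = a * b -> a \is a GRing.unit \/ b \is a GRing.unit.

Variable R : realType.

(* log discrepancy a(E, X, lam * div f) of the exceptional divisor E given by
   (p, s):  a(E) = 1 + ord_E K_{Y/X} - lam * ord_E f *)
Definition ld (f : poly2) (lam : R) (p : F * F) (s : seq (option F)) : R :=
  let Phi := chart p s in
  1 + (ordx (jac Phi))%:R - lam * (ordx (eval2 f Phi.1 Phi.2))%:R.

(* (X, lam * div f) is lc: a(E) >= 0 for every prime divisor E over X,
   i.e. for exceptional divisors (centred at closed points) and for the prime
   divisors {g = 0} of X, whose log discrepancy is 1 - lam * ord_g f. *)
Definition lc_pair (f : poly2) (lam : R) : Prop :=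
  (forall p s, 0 <= ld f lam p s) /\
  (forall g : poly2, irreducible2 g ->
     forall (k : nat) (h : poly2), f = g ^+ k * h -> lam * k%:R <= 1).

Definition mld0 (f : poly2) (lam : R) : \bar R :=
  ereal_inf [set (ld f lam (0, 0) s)%:E | s in [set: seq (option F)]].

End Defs.

(* Main.v *)
Require Import Defs.
From HB Require Import structures.
From mathcomp Require Import all_boot all_order all_algebra.
From mathcomp Require Import classical_sets boolp reals ereal.
From mathcomp Require Import ring zify lra.
Import Order.TTheory GRing.Theory Num.Theory.
Local Open Scope ring_scope.
Set Implicit Arguments. Unset Strict Implicit. Unset Printing Implicit Defensive.


Section Alg.
Variable F : fieldType.
Local Notation p2 := (poly2 F).
Local Notation xv := (xv F).
Local Notation yv := (yv F).
Local Notation cst := (@cst F).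
Local Notation dx := (@dx F).
Local Notation dy := (@dy F).
Local Notation jac := (@jac F).
Local Notation comp_pmap := (@comp_pmap F).
Local Notation eval2 := (@eval2 F).

Lemma cfu_any (A : nzSemiRingType) (f : A -> p2) (u : p2) : commr_rmorph f u.
Proof. by move=> a; rewrite /GRing.comm mulrC. Qed.
Definition ev1 (P : p2) : {poly F} -> p2 :=
  horner_morph (@cfu_any _ (polyC \o polyC : {rmorphism F -> p2}) P).
Definition E2 (P Q : p2) : p2 -> p2 := horner_morph (@cfu_any _ (ev1 P) Q).

Lemma E2D P Q p q : E2 P Q (p + q) = E2 P Q p + E2 P Q q.
Proof. by rewrite /E2 rmorphD. Qed.
Lemma E2M P Q p q : E2 P Q (p * q) = E2 P Q p * E2 P Q q.
Proof. by rewrite /E2 rmorphM. Qed.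
Lemma E2B P Q p q : E2 P Q (p - q) = E2 P Q p - E2 P Q q.
Proof. by rewrite /E2 rmorphB. Qed.
Lemma E2X P Q p k : E2 P Q (p ^+ k) = E2 P Q p ^+ k.
Proof. by rewrite /E2 rmorphXn. Qed.
Lemma E21 P Q : E2 P Q 1 = 1.
Proof. by rewrite /E2 rmorph1. Qed.
Lemma E20 P Q : E2 P Q 0 = 0.
Proof. by rewrite /E2 rmorph0. Qed.
Lemma E2x P Q : E2 P Q xv = P.
Proof. rewrite /E2 /Defs.xv horner_morphC; exact: horner_morphX. Qed.
Lemma E2y P Q : E2 P Q yv = Q.
Proof. by rewrite /E2 /Defs.yv horner_morphX. Qed.
Lemma E2c P Q c : E2 P Q (cst c) = cst c.
Proof. rewrite /E2 /Defs.cst horner_morphC; exact: horner_morphC. Qed.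

Lemma size_map_le (A B : nzSemiRingType) (f : A -> B) (p : {poly A}) :
  (size (map_poly f p) <= size p)%N.
Proof. by rewrite /map_poly size_poly. Qed.

Lemma ev1E P q : ev1 P q = \sum_(j < size q) cst q`_j * P ^+ j.
Proof.
rewrite /ev1 /horner_morph (horner_coef_wide _ (size_map_le _ _)).
by apply: eq_bigr => j _; rewrite coef_map_id0.
Qed.

Lemma eval2E p P Q : eval2 p P Q = E2 P Q p.
Proof.
rewrite /eval2 /E2 /horner_morph (horner_coef_wide _ (size_map_le _ _)).
apply: eq_bigr => i _; rewrite coef_map_id0; last by rewrite ev1E size_poly0 big_ord0.
by rewrite ev1E.
Qed.

Lemma poly2_ind (K : p2 -> Prop) :
  (forall c, K (cst c)) -> K xv -> K yv ->
  (forall p q, K p -> K q -> K (p + q)) ->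
  (forall p q, K p -> K q -> K (p * q)) -> forall p, K p.
Proof.
move=> Kc Kx Ky KD KM.
have K0 : K 0 by have := Kc 0; rewrite /Defs.cst !polyC0.
have Kq : forall q : {poly F}, K q%:P.
  elim/poly_ind => [|q c Hq]; first by rewrite polyC0.
  by rewrite polyCD polyCM; apply: KD; [apply: KM | exact: Kc].
elim/poly_ind => [|p q Hp] //.
by apply: KD; [apply: KM | exact: Kq].
Qed.

Definition ev00 (p : p2) : F := (p`_0)`_0.
Lemma ev00D p q : ev00 (p + q) = ev00 p + ev00 q.
Proof. by rewrite /ev00 !coefD. Qed.
Lemma ev00M p q : ev00 (p * q) = ev00 p * ev00 q.
Proof. by rewrite /ev00 !coef0M. Qed.
Lemma ev00X p k : ev00 (p ^+ k) = ev00 p ^+ k.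
Proof.
elim: k => [|k IH]; first by rewrite !expr0 /ev00 !coefC.
by rewrite !exprS ev00M IH.
Qed.
Lemma ev00c c : ev00 (cst c) = c.
Proof. by rewrite /ev00 /Defs.cst !coefC. Qed.
Lemma ev00x : ev00 xv = 0.
Proof. by rewrite /ev00 /Defs.xv coefC /= coefX. Qed.
Lemma ev00y : ev00 yv = 0.
Proof. by rewrite /ev00 /Defs.yv coefX /= coefC. Qed.
Lemma ev001 : ev00 1 = 1.
Proof. by have := ev00c 1; rewrite /Defs.cst !polyC1. Qed.

Lemma E2_ev00 P Q p : ev00 P = 0 -> ev00 Q = 0 -> ev00 (E2 P Q p) = ev00 p.
Proof.
move=> HP HQ; elim/poly2_ind: p.
- by move=> c; rewrite E2c.
- by rewrite E2x HP ev00x.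
- by rewrite E2y HQ ev00y.
- by move=> p q Hp Hq; rewrite E2D !ev00D Hp Hq.
- by move=> p q Hp Hq; rewrite E2M !ev00M Hp Hq.
Qed.

Lemma dxD p q : dx (p + q) = dx p + dx q.
Proof. by apply/polyP => i; rewrite /dx coefD !coef_map_id0 ?deriv0 // coefD derivD. Qed.
Lemma dyD p q : dy (p + q) = dy p + dy q.
Proof. by rewrite /dy derivD. Qed.
Lemma dxM p q : dx (p * q) = dx p * q + p * dx q.
Proof.
apply/polyP => i; rewrite /dx coefD coef_map_id0 ?deriv0 // !coefM.
rewrite raddf_sum -big_split /=; apply: eq_bigr => j _.
by rewrite derivM !coef_map_id0 ?deriv0.
Qed.
Lemma dyM p q : dy (p * q) = dy p * q + p * dy q.
Proof. by rewrite /dy derivM. Qed.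
Lemma dxc c : dx (cst c) = 0.
Proof. by rewrite /dx /Defs.cst map_polyC /= derivC polyC0. Qed.
Lemma dyc c : dy (cst c) = 0.
Proof. by rewrite /dy /Defs.cst derivC. Qed.
Lemma dxx : dx xv = 1.
Proof. by rewrite /dx /Defs.xv map_polyC /= derivX polyC1. Qed.
Lemma dyx : dy xv = 0.
Proof. by rewrite /dy /Defs.xv derivC. Qed.
Lemma dxy : dx yv = 0.
Proof.
apply/polyP => i; rewrite /dx /Defs.yv coef_map_id0 ?deriv0 // coefX coef0.
by case: (i == 1)%N; rewrite ?deriv0 // -polyC1 derivC.
Qed.
Lemma dyy : dy yv = 1.
Proof. by rewrite /dy /Defs.yv derivX. Qed.
Lemma dx0 : dx 0 = 0.
Proof. by have := dxc 0; rewrite /Defs.cst !polyC0. Qed.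
Lemma dy0 : dy 0 = 0.
Proof. by rewrite /dy deriv0. Qed.

Lemma chain_x P Q p :
  dx (E2 P Q p) = E2 P Q (dx p) * dx P + E2 P Q (dy p) * dx Q.
Proof.
elim/poly2_ind: p.
- by move=> c; rewrite E2c dxc dyc E20 !mul0r addr0.
- by rewrite E2x dxx dyx E21 E20 mul1r mul0r addr0.
- by rewrite E2y dxy dyy E21 E20 mul1r mul0r add0r.
- move=> p q Hp Hq; rewrite E2D dxD Hp Hq dxD dyD !E2D; ring.
- move=> p q Hp Hq; rewrite E2M dxM Hp Hq dxM dyM !E2D !E2M; ring.
Qed.
Lemma chain_y P Q p :
  dy (E2 P Q p) = E2 P Q (dx p) * dy P + E2 P Q (dy p) * dy Q.
Proof.
elim/poly2_ind: p.
- by move=> c; rewrite E2c dxc dyc E20 !mul0r addr0.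
- by rewrite E2x dxx dyx E21 E20 mul1r mul0r addr0.
- by rewrite E2y dxy dyy E21 E20 mul1r mul0r add0r.
- move=> p q Hp Hq; rewrite E2D dyD Hp Hq dxD dyD !E2D; ring.
- move=> p q Hp Hq; rewrite E2M dyM Hp Hq dxM dyM !E2D !E2M; ring.
Qed.

Lemma jac_comp psi P Q :
  jac (comp_pmap psi P Q) = E2 P Q (jac psi) * jac (P, Q).
Proof.
rewrite /jac /comp_pmap /= !eval2E !chain_x !chain_y E2B !E2M; ring.
Qed.

Lemma size_gt (R : nzSemiRingType) (p : {poly R}) i : p`_i != 0 -> (i < size p)%N.
Proof. by apply: contraNT; rewrite -leqNgt => h; rewrite nth_default. Qed.

Lemma coef_xvM k (W : p2) i : (xv ^+ k * W)`_i = 'X^k * W`_i.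
Proof. by rewrite /Defs.xv -polyC_exp coefCM. Qed.

Lemma ordx_mono k (W : p2) i0 : (W`_i0)`_0 != 0 -> ordx (xv ^+ k * W) = k.
Proof.
move=> hW; set q := xv ^+ k * W.
have cq : forall i, coefx q i = 'X^k * W`_i by move=> i; rewrite /coefx coef_xvM.
have hk : ((coefx q i0)`_k != 0) by rewrite cq coefXnM ltnn subnn.
have hi0 : (i0 < size q)%N.
  apply: size_gt; apply: contraNneq hk => h; by rewrite /coefx h coef0.
have hX : forall j (r : {poly F}), (r %| 'X^j) = false -> True by [].
rewrite /ordx; apply/eqP; rewrite eqn_leq; apply/andP; split.
- apply/bigmax_leqP => j /forallP /(_ (Ordinal hi0)) /dvdpP [t ht].
  rewrite leqNgt; apply/negP => hkj; move: hk; rewrite /= in ht.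
  by rewrite ht coefMXn hkj eqxx.
- have hkB : (k < (\max_(i < size q) size (coefx q i)).+1)%N.
    rewrite ltnS; apply: leq_trans (leq_bigmax (Ordinal hi0)).
    exact: ltnW (size_gt hk).
  apply: (@leq_trans (nat_of_ord (Ordinal hkB))) => //.
  apply: (leq_bigmax_cond (Ordinal hkB)).
  by apply/forallP => i; rewrite cq dvdp_mulIl.
Qed.

End Alg.


Section St.
Variable F : fieldType.
Local Notation p2 := (poly2 F).
Local Notation xv := (xv F).
Local Notation yv := (yv F).
Local Notation cst := (@cst F).
Local Notation dx := (@dx F).
Local Notation dy := (@dy F).
Local Notation jac := (@jac F).
Local Notation comp_pmap := (@comp_pmap F).
Local Notation eval2 := (@eval2 F).

Definition mono g d (U : p2) : p2 := xv ^+ g * yv ^+ d * U.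
Definition unitp (U : p2) := ev00 U != 0.

Lemma monoM g d U g' d' U' : mono g d U * mono g' d' U' = mono (g + g') (d + d') (U * U').
Proof. rewrite /mono !exprD; ring. Qed.
Lemma monoX g d U k : mono g d U ^+ k = mono (g * k) (d * k) (U ^+ k).
Proof. by rewrite /mono !exprMn !exprM. Qed.
Lemma unitpM U V : unitp U -> unitp V -> unitp (U * V).
Proof. by rewrite /unitp ev00M mulf_eq0 => /negbTE -> /negbTE ->. Qed.
Lemma unitpX U k : unitp U -> unitp (U ^+ k).
Proof. by rewrite /unitp ev00X => h; rewrite expf_neq0. Qed.
Lemma unitp1 : unitp 1.
Proof. by rewrite /unitp ev001 oner_neq0. Qed.

Lemma E2mono P Q g d U : E2 P Q (mono g d U) = P ^+ g * Q ^+ d * E2 P Q U.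
Proof. by rewrite /mono !E2M !E2X E2x E2y. Qed.

Lemma ordx_monoE a b U : unitp U -> ordx (mono a b U) = a.
Proof.
move=> hU; rewrite /mono -mulrA (@ordx_mono _ _ _ b) //.
by rewrite /Defs.yv coefXnM ltnn subnn.
Qed.

Lemma coef_mono0 e f (V : p2) i :
  ((mono e f V)`_i)`_0 = if (0 < e)%N then 0 else if (i < f)%N then 0 else (V`_(i - f))`_0.
Proof.
rewrite /mono -mulrA coef_xvM coefXnM /Defs.yv coefXnM.
case: (0 < e)%N => //; rewrite sub0n; case: (i < f)%N => //; by rewrite coef0.
Qed.

Lemma ordx_two e1 f1 V1 e2 f2 V2 : unitp V1 -> unitp V2 -> (e1 != e2) || (f1 != f2) ->
  ordx (mono e1 f1 V1 + mono e2 f2 V2) = minn e1 e2.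
Proof.
move=> h1 h2 hne.
have split_ : forall e N f V, (N <= e)%N -> mono e f V = xv ^+ N * mono (e - N) f V.
  by move=> e N f V hN; rewrite /mono !mulrA -exprD subnKC.
rewrite (split_ e1 (minn e1 e2)) ?geq_minl // (split_ e2 (minn e1 e2)) ?geq_minr //.
rewrite -mulrDr.
have [lt12|lt21|eq12] := ltngtP e1 e2.
- apply: (@ordx_mono _ _ _ f1); rewrite !coefD !coef_mono0.
  by rewrite !subnn subn_gt0 lt12 !ltnn addr0; exact: h1.
- apply: (@ordx_mono _ _ _ f2); rewrite !coefD !coef_mono0.
  by rewrite !subnn subn_gt0 lt21 !ltnn add0r; exact: h2.
- move: hne; rewrite eq12 eqxx /= => hf; rewrite !subnn.
  have [lf|lf|ef] := ltngtP f1 f2; last by rewrite ef eqxx in hf.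
  + apply: (@ordx_mono _ _ _ f1); rewrite !coefD !coef_mono0 /= !ltnn !subnn lf addr0; exact: h1.
  + apply: (@ordx_mono _ _ _ f2); rewrite !coefD !coef_mono0 /= !ltnn !subnn lf add0r; exact: h2.
Qed.

Lemma cst0 : cst 0 = 0.
Proof. by rewrite /Defs.cst !polyC0. Qed.

Lemma jacTc c : jac (xv, xv * (cst c + yv)) = xv.
Proof.
rewrite /jac /= !(dxM, dyM, dxD, dyD, dxx, dyx, dxy, dyy, dxc, dyc); ring.
Qed.
Lemma jacTi : jac (xv * yv, yv) = yv.
Proof.
rewrite /jac /= !(dxM, dyM, dxD, dyD, dxx, dyx, dxy, dyy, dxc, dyc); ring.
Qed.
Lemma jac_start : jac (start (0, 0)) = 1.
Proof.
rewrite /jac /start /= !(dxM, dyM, dxD, dyD, dxx, dyx, dxy, dyy, dxc, dyc); ring.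
Qed.

Lemma E2_Tc c g d U : E2 xv (xv * (cst c + yv)) (mono g d U) =
  mono (g + d) 0 ((cst c + yv) ^+ d * E2 xv (xv * (cst c + yv)) U).
Proof. rewrite E2mono /mono exprMn exprD expr0; ring. Qed.
Lemma E2_T0 g d U : E2 xv (xv * yv) (mono g d U) = mono (g + d) d (E2 xv (xv * yv) U).
Proof. rewrite E2mono /mono exprMn exprD; ring. Qed.
Lemma E2_Ti g d U : E2 (xv * yv) yv (mono g d U) = mono g (g + d) (E2 (xv * yv) yv U).
Proof. rewrite E2mono /mono exprMn exprD; ring. Qed.
Lemma mono_x g d U : mono g d U * xv = mono (g + 1) d U.
Proof. rewrite /mono exprD expr1; ring. Qed.
Lemma mono_y g d U : mono g d U * yv = mono g (d + 1) U.
Proof. rewrite /mono [yv ^+ (d + 1)]exprD expr1; ring. Qed.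

Lemma ev00L c : ev00 (cst c + yv) = c.
Proof. by rewrite ev00D ev00c ev00y addr0. Qed.

Lemma unit_Tc c U : unitp U -> unitp (E2 xv (xv * (cst c + yv)) U).
Proof. by rewrite /unitp E2_ev00 // ?ev00x // ev00M ev00x mul0r. Qed.
Lemma unit_Ti U : unitp U -> unitp (E2 (xv * yv) yv U).
Proof. by rewrite /unitp E2_ev00 // ?ev00y // ev00M ev00x mul0r. Qed.

Lemma natr_inj0 (h0 : [pchar F] =i pred0) (i j : nat) : (i%:R = j%:R :> F) -> i = j.
Proof.
have hp := (pcharf0P F).1 h0.
wlog lij : i j / (i <= j)%N.
  move=> W; case/orP: (leq_total i j) => h; first exact: W.
  by move=> e; symmetry; apply: W => //; rewrite e.
move=> e; have : ((j - i)%:R == 0 :> F) by rewrite natrB // e subrr.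
by rewrite hp subn_eq0 => hji; apply/eqP; rewrite eqn_leq lij hji.
Qed.

Definition emb (q : {poly F}) : p2 := map_poly polyC q.

Lemma simple_root (h0 : [pchar F] =i pred0) (c : F) i j : c != 0 -> i <> j ->
  exists e V, (cst c + yv) ^+ i + (cst c + yv) ^+ j = mono 0 e V /\ (e <= 1)%N /\ unitp V.
Proof.
move=> hc hij.
set h : {poly F} := ('X + c%:P) ^+ i + ('X + c%:P) ^+ j.
have eh : emb h = (cst c + yv) ^+ i + (cst c + yv) ^+ j.
  by rewrite /emb /h rmorphD !rmorphXn /= map_polyXaddC /Defs.cst /Defs.yv [_ + 'X]addrC.
have ev_emb : forall q, ev00 (emb q) = q.[0].
  by move=> q; rewrite /ev00 /emb coef_map /= coefC /= horner_coef0.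
rewrite -eh.
have [hr|hr] := eqVneq h.[0] 0; last first.
  exists 0%N, (emb h); split; first by rewrite /mono !expr0 !mul1r.
  by split => //; rewrite /unitp ev_emb.
have /factor_theorem [w hw] : root h 0 by apply/eqP.
rewrite subr0 in hw.
exists 1%N, (emb w); split; first by rewrite hw /emb rmorphM /= map_polyX /mono expr0 expr1 mul1r mulrC.
split => //; rewrite /unitp ev_emb.
have hd : h^`().[0] = w.[0].
  by rewrite hw derivM derivX hornerD hornerM hornerX mulr0 add0r mulr1.
rewrite -hd.
have hd2 : c * h^`().[0] = c ^+ i *+ i + c ^+ j *+ j.
  rewrite /h derivD !deriv_exp derivD derivX derivC addr0 !mul1r hornerD !hornerMn !horner_exp.
  rewrite hornerD hornerX hornerC add0r mulrDr.
  have hk : forall k, c * (c ^+ k.-1 *+ k) = c ^+ k *+ k.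
    by case=> [|k]; rewrite ?mulr0n ?mulr0 // mulrnAr -exprS.
  by rewrite !hk.
move: hr; rewrite /h hornerD !horner_exp hornerD hornerX hornerC add0r => hr.
have ecj : c ^+ j = - c ^+ i by apply/eqP; rewrite -addr_eq0 addrC hr.
apply/negP => /eqP hz; move: hd2; rewrite hz mulr0 ecj mulNrn.
move=> /eqP; rewrite eq_sym subr_eq0 => /eqP e.
have e' : c ^+ i * i%:R = c ^+ i * j%:R by rewrite !mulr_natr.
by apply: hij; apply: (natr_inj0 h0); apply: (mulfI (expf_neq0 i hc)).
Qed.

Variables m n : nat.

Definition Inv (psi : (p2 * p2)%type) g1 d1 g2 d2 a b : Prop :=
  exists U1 U2 U,
  [/\ psi.1 = mono g1 d1 U1, psi.2 = mono g2 d2 U2, jac psi = mono a b U &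
      [/\ unitp U1, unitp U2 & unitp U]] /\
  [/\ (0 < g1 + d1)%N, (0 < g2 + d2)%N, (g1 + g2 <= a + 1)%N & (d1 + d2 <= b + 1)%N] /\
  ( (U1 = 1 /\ U2 = 1 /\ (g1 * d2 = d1 * g2 + 1)%N)
  \/ (g1 * d2 = d1 * g2 /\ (m * g1 <> n * g2 \/ m * d1 <> n * d2))%N
  \/ ((m * g1 = n * g2)%N /\ (m * d1 = n * d2)%N /\
      exists k1 k2 V, U1 ^+ m + U2 ^+ n = mono k1 k2 V /\ unitp V /\
        (g1 + g2 + k1 <= a + 1)%N /\ (d1 + d2 + k2 <= b + 1)%N)).

Lemma Inv_T0 psi g1 d1 g2 d2 a b : Inv psi g1 d1 g2 d2 a b ->
  Inv (step psi (Some 0)) (g1 + d1) d1 (g2 + d2) d2 (a + b + 1) b.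
Proof.
case=> U1 [U2 [U [[h1 h2 hj [u1 u2 u]] [[p1 p2 q1 q2] H]]]].
have se : step psi (Some 0) = comp_pmap psi xv (xv * yv) by rewrite /step cst0 add0r.
have eT : forall V, unitp V -> unitp (E2 xv (xv * yv) V).
  by move=> V hV; have := unit_Tc 0 hV; rewrite cst0 add0r.
exists (E2 xv (xv * yv) U1), (E2 xv (xv * yv) U2), (E2 xv (xv * yv) U).
rewrite se jac_comp hj /comp_pmap /= !eval2E h1 h2 !E2_T0.
have -> : jac (xv, xv * yv) = xv by have := jacTc 0; rewrite cst0 add0r.
rewrite mono_x; split; first by split => //; split; apply: eT.
split; first by split; lia.
case: H => [[e1 [e2 hd]]|[[hd hu]|[e1 [e2 [k1 [k2 [V [hK [hV [i1 i2]]]]]]]]]].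
- left; rewrite e1 e2 E21; split => //; split => //; nia.
- right; left; split; first nia.
  by case: hu => hu; [left|right]; nia.
- right; right; split; first nia; split; first nia.
  exists (k1 + k2), k2, (E2 xv (xv * yv) V).
  rewrite -!E2X -E2D hK E2_T0; split => //; split; first exact: eT.
  by split; lia.
Qed.

Lemma Inv_Ti psi g1 d1 g2 d2 a b : Inv psi g1 d1 g2 d2 a b ->
  Inv (step psi None) g1 (g1 + d1) g2 (g2 + d2) a (a + b + 1).
Proof.
case=> U1 [U2 [U [[h1 h2 hj [u1 u2 u]] [[p1 p2 q1 q2] H]]]].
have eT := unit_Ti.
exists (E2 (xv * yv) yv U1), (E2 (xv * yv) yv U2), (E2 (xv * yv) yv U).
rewrite /step jac_comp hj /comp_pmap /= !eval2E h1 h2 !E2_Ti jacTi mono_y.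
split; first by split => //; split; apply: eT.
split; first by split; lia.
case: H => [[e1 [e2 hd]]|[[hd hu]|[e1 [e2 [k1 [k2 [V [hK [hV [i1 i2]]]]]]]]]].
- left; rewrite e1 e2 E21; split => //; split => //; nia.
- right; left; split; first nia.
  by case: hu => hu; [left|right]; nia.
- right; right; split; first nia; split; first nia.
  exists k1, (k1 + k2), (E2 (xv * yv) yv V).
  rewrite -!E2X -E2D hK E2_Ti; split => //; split; first exact: eT.
  by split; lia.
Qed.

Lemma prop_unmatched g1 d1 g2 d2 : (0 < g2 + d2)%N -> (g1 * d2 = d1 * g2)%N ->
  (m * g1 <> n * g2 \/ m * d1 <> n * d2)%N -> (m * (g1 + d1) <> n * (g2 + d2))%N.
Proof.
move=> hp hd hu he.
have h1 : (m * g1 * (g2 + d2) = n * g2 * (g2 + d2))%N.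
  rewrite -mulnA mulnDr hd -mulnDl mulnA he mulnAC //.
have h2 : (m * g1 = n * g2)%N.
  by apply/eqP; rewrite -(eqn_pmul2r hp); apply/eqP.
have h3 : (m * d1 = n * d2)%N.
  by move: he; rewrite !mulnDr h2 => /eqP; rewrite eqn_add2l => /eqP.
by case: hu.
Qed.

Lemma det_unmatched g1 d1 g2 d2 : (0 < m)%N -> (0 < n)%N ->
  (g1 * d2 = d1 * g2 + 1)%N -> (m * g1 = n * g2)%N -> (m * d1 = n * d2)%N -> False.
Proof.
move=> hm hn hd e1 e2.
have : (m * n * (g1 * d2) = m * n * (d1 * g2))%N.
  rewrite mulnACA [(m * n * (d1 * g2))%N]mulnACA.
  by rewrite e1 -e2 mulnC.
rewrite hd mulnDr muln1 => /eqP; rewrite -{2}[(m * n * (d1 * g2))%N]addn0 eqn_add2l.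
by rewrite muln_eq0 !eqn0Ngt hm hn.
Qed.

End St.


Section St2.
Variable F : fieldType.
Local Notation p2 := (poly2 F).
Local Notation xv := (xv F).
Local Notation yv := (yv F).
Local Notation cst := (@cst F).
Local Notation jac := (@jac F).
Variables m n : nat.
Local Notation Inv := (@Inv F m n).
Local Notation det_unmatched := (@det_unmatched m n).
Local Notation prop_unmatched := (@prop_unmatched m n).
Lemma Inv_Tc (h0 : [pchar F] =i pred0) (hm : (0 < m)%N) (hn : (0 < n)%N)
  c psi g1 d1 g2 d2 a b : c != 0 -> Inv psi g1 d1 g2 d2 a b ->
  Inv (step psi (Some c)) (g1 + d1) 0 (g2 + d2) 0 (a + b + 1) 0.
Proof.
move=> hc [U1 [U2 [U [[h1 h2 hj [u1 u2 u]] [[p1 p2 q1 q2] H]]]]].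
set L := cst c + yv.
set E := E2 xv (xv * L).
have uL : unitp L by rewrite /unitp ev00L.
have eT : forall V, unitp V -> unitp (E V) by move=> V; apply: unit_Tc.
exists (L ^+ d1 * E U1), (L ^+ d2 * E U2), (L ^+ b * E U).
rewrite /step jac_comp hj /comp_pmap /= !eval2E h1 h2 !E2_Tc jacTc mono_x.
split; first by split => //; split; apply: unitpM; rewrite ?eT //; apply: unitpX.
split; first by split; lia.
case: H => [[e1 [e2 hd]]|[[hd hu]|[e1 [e2 [k1 [k2 [V [hK [hV [i1 i2]]]]]]]]]].
- rewrite e1 e2 /E E21 !mulr1.
  have [he|he] := eqVneq (m * (g1 + d1))%N (n * (g2 + d2))%N; last first.
    by right; left; split; [lia | left; apply/eqP].
  have hne : (d1 * m <> d2 * n)%N.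
    move=> e; have e' : (m * d1 = n * d2)%N by rewrite mulnC e mulnC.
    apply: (det_unmatched hm hn hd _ e').
    by move/eqP: he; rewrite !mulnDr e' eqn_add2r => /eqP.
  have [e [V [hK [he1 hV]]]] := simple_root h0 hc hne.
  right; right; split; first exact: he.
  split; first by rewrite !muln0.
  exists 0%N, e, V; rewrite -!exprM hK; split => //; split => //; split; lia.
- right; left; split; first by rewrite !muln0.
  left; exact: prop_unmatched.
- right; right; split; first by rewrite !mulnDr e1 e2.
  split; first by rewrite !muln0.
  exists (k1 + k2)%N, 0%N, (L ^+ (d1 * m + k2) * E V).
  rewrite !exprMn -!exprM [(d2 * n)%N]mulnC -e2 [(m * d1)%N]mulnC.
  have -> : L ^+ (d1 * m) * E U1 ^+ m + L ^+ (d1 * m) * E U2 ^+ n =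
            L ^+ (d1 * m) * E (U1 ^+ m + U2 ^+ n) by rewrite /E E2D !E2X -mulrDr.
  rewrite hK /E E2_Tc /mono !exprD !expr0; split; first ring.
  split; first by apply: unitpM; [apply: unitpM; apply: unitpX | apply: eT].
  by split; lia.
Qed.

End St2.


Section Fin.
Variable F : fieldType.
Local Notation p2 := (poly2 F).
Local Notation xv := (xv F).
Local Notation yv := (yv F).
Local Notation cst := (@cst F).
Local Notation jac := (@jac F).
Local Notation eval2 := (@eval2 F).
Variables m n : nat.
Hypotheses (hm : (0 < m)%N) (hn : (0 < n)%N) (h0 : [pchar F] =i pred0).
Local Notation Inv := (@Inv F m n).

Lemma Inv_start : Inv (start (0, 0)) 1 0 0 1 0 0.
Proof.
exists 1, 1, 1; rewrite jac_start /start /= cst0 !add0r.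
split; first by split; rewrite /mono ?expr0 ?expr1 ?mulr1 ?mul1r //; split; exact: unitp1.
by split; [split | left].
Qed.

Lemma Inv_step psi o g1 d1 g2 d2 a b : Inv psi g1 d1 g2 d2 a b ->
  exists g1' d1' g2' d2' a' b', Inv (step psi o) g1' d1' g2' d2' a' b'.
Proof.
move=> H; case: o => [c|]; last by do 6 eexists; exact: Inv_Ti H.
have [->|hc] := eqVneq c 0; first by do 6 eexists; exact: Inv_T0 H.
by do 6 eexists; exact: (@Inv_Tc F m n h0 hm hn c psi _ _ _ _ _ _ hc H).
Qed.

Lemma Inv_foldl s : forall psi, (exists g1 d1 g2 d2 a b, Inv psi g1 d1 g2 d2 a b) ->
  exists g1 d1 g2 d2 a b, Inv (foldl (@step F) psi s) g1 d1 g2 d2 a b.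
Proof.
elim: s => [|o s IH] psi H //=; apply: IH.
by case: H => g1 [d1 [g2 [d2 [a [b H]]]]]; exact: Inv_step H.
Qed.

Lemma chart_step (s : seq (option F)) : chart (0, 0) s = step (centre_coords (0, 0) s) (Some 0).
Proof. by rewrite /chart /step cst0 add0r. Qed.

Lemma eval2_f (X Y : p2) : eval2 (fmn F m n) X Y = X ^+ m + Y ^+ n.
Proof. by rewrite eval2E /fmn E2D !E2X E2x E2y. Qed.

Lemma ordx_f_unm G1 D1 G2 D2 U1 U2 : unitp U1 -> unitp U2 ->
  (m * G1 != n * G2)%N || (m * D1 != n * D2)%N ->
  ordx (eval2 (fmn F m n) (mono G1 D1 U1) (mono G2 D2 U2)) = minn (m * G1) (n * G2).
Proof.
move=> u1 u2 hu; rewrite eval2_f !monoX ordx_two ?unitpX //; first by rewrite ![(_ * m)%N]mulnC ![(_ * n)%N]mulnC.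
by rewrite ![(_ * m)%N]mulnC ![(_ * n)%N]mulnC.
Qed.

Lemma ordx_f_m G1 D1 G2 D2 U1 U2 k1 k2 V : unitp V ->
  (m * G1 = n * G2)%N -> (m * D1 = n * D2)%N ->
  U1 ^+ m + U2 ^+ n = mono k1 k2 V ->
  ordx (eval2 (fmn F m n) (mono G1 D1 U1) (mono G2 D2 U2)) = (m * G1 + k1)%N.
Proof.
move=> hV e1 e2 hK; rewrite eval2_f !monoX [(G2 * n)%N]mulnC -e1 [(D2 * n)%N]mulnC -e2.
rewrite ![(_ * m)%N]mulnC.
have -> : mono (m * G1) (m * D1) (U1 ^+ m) + mono (m * G1) (m * D1) (U2 ^+ n) =
  mono (m * G1 + k1) (m * D1 + k2) V by rewrite /mono -!mulrDr hK /mono !exprD; ring.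
by rewrite ordx_monoE.
Qed.

Variable R : realType.
Variable lam : R.
Hypotheses (hl0 : 0 < lam) (hl1 : lam <= 1).

Definition gf (p1 p2 : nat) : R :=
  (p1 + p2)%:R - Num.min (lam * (m * p1)%:R) (lam * (n * p2)%:R).

Lemma lam_minn x y : lam * (minn x y)%:R = Num.min (lam * x%:R) (lam * y%:R).
Proof.
have [hxy|hxy] := leqP x y.
  by rewrite min_l // ler_pM2l // ler_nat.
by rewrite min_r // ler_pM2l // ler_nat ltnW.
Qed.

Lemma gf_unm G1 G2 A : (G1 + G2 <= A + 1)%N ->
  gf G1 G2 <= 1 + A%:R - lam * (minn (m * G1) (n * G2))%:R.
Proof.
move=> hq; have hq' : (G1 + G2)%:R <= (A + 1)%:R :> R by rewrite ler_nat.
rewrite natrD in hq'; rewrite lam_minn /gf; lra.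
Qed.

Lemma gf_m G1 G2 A k1 : (m * G1 = n * G2)%N -> (G1 + G2 + k1 <= A + 1)%N ->
  gf G1 G2 <= 1 + A%:R - lam * (m * G1 + k1)%:R.
Proof.
move=> e hq; have hq' : (G1 + G2 + k1)%:R <= (A + 1)%:R :> R by rewrite ler_nat.
rewrite !natrD in hq'; rewrite /gf -e minxx natrD.
have hk : lam * k1%:R <= k1%:R by rewrite ler_piMl.
lra.
Qed.

Lemma ld_ge s : exists G1 G2, [/\ (0 < G1)%N, (0 < G2)%N &
  gf G1 G2 <= ld (fmn F m n) lam (0, 0) s].
Proof.
have [g1 [d1 [g2 [d2 [a [b H]]]]]] := Inv_foldl s (ex_intro _ 1%N (ex_intro _ 0%N
  (ex_intro _ 0%N (ex_intro _ 1%N (ex_intro _ 0%N (ex_intro _ 0%N Inv_start)))))).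
have [hp1 hp2] : (0 < g1 + d1)%N /\ (0 < g2 + d2)%N.
  by case: H => [? [? [? [_ [[? ? _ _] _]]]]].
have H' : Inv (chart (0, 0) s) (g1 + d1) d1 (g2 + d2) d2 (a + b + 1) b.
  by rewrite chart_step; exact: Inv_T0 H.
exists (g1 + d1)%N, (g2 + d2)%N.
move: H' => [U1 [U2 [U [[h1 h2 hj [u1 u2 u]] [[p1 p2 q1 q2] D]]]]].
split => //.
have -> : ld (fmn F m n) lam (0, 0) s = 1 + (ordx (jac (chart (0, 0) s)))%:R -
   lam * (ordx (eval2 (fmn F m n) (chart (0, 0) s).1 (chart (0, 0) s).2))%:R by [].
rewrite hj ordx_monoE // h1 h2.
case: D => [[e1 [e2 hd]]|[[hd hu]|[e1 [e2 [k1 [k2 [V [hK [hV [i1 i2]]]]]]]]]].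
- rewrite ordx_f_unm //; first exact: gf_unm.
  rewrite -negb_and; apply/negP => /andP [/eqP x /eqP y].
  exact: det_unmatched hm hn hd x y.
- rewrite ordx_f_unm //; first exact: gf_unm.
  by case: hu => hu; apply/orP; [left|right]; apply/eqP.
- rewrite (ordx_f_m hV e1 e2 hK); exact: gf_m.
Qed.

End Fin.


Section Reach.
Variable F : fieldType.
Local Notation p2 := (poly2 F).
Variables m n : nat.
Hypotheses (hm : (0 < m)%N) (hn : (0 < n)%N) (h0 : [pchar F] =i pred0).
Local Notation Inv := (@Inv F m n).

Definition TS (psi : (p2 * p2)%type) g1 d1 g2 d2 := exists a b,
  [/\ Inv psi g1 d1 g2 d2 a b, (a + 1 = g1 + g2)%N, (b + 1 = d1 + d2)%N &
      (g1 * d2 = d1 * g2 + 1)%N].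

Lemma TS_T0 psi g1 d1 g2 d2 : TS psi g1 d1 g2 d2 ->
  TS (step psi (Some 0)) (g1 + d1) d1 (g2 + d2) d2.
Proof.
case=> a [b [H ea eb ed]]; exists (a + b + 1)%N, b; split.
- exact: Inv_T0 H.
- lia.
- lia.
- by rewrite mulnDl mulnDr ed; lia.
Qed.

Lemma TS_Ti psi g1 d1 g2 d2 : TS psi g1 d1 g2 d2 ->
  TS (step psi None) g1 (g1 + d1) g2 (g2 + d2).
Proof.
case=> a [b [H ea eb ed]]; exists a, (a + b + 1)%N; split.
- exact: Inv_Ti H.
- lia.
- lia.
- by rewrite mulnDl mulnDr ed; lia.
Qed.

Lemma TS_start : TS (start (0, 0)) 1 0 0 1.
Proof. by exists 0%N, 0%N; split => //; exact: Inv_start. Qed.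

Lemma reach N : forall i j, (i + j <= N)%N -> (0 < i)%N -> (0 < j)%N ->
  forall psi g1 d1 g2 d2, TS psi g1 d1 g2 d2 ->
  exists s G1 D1 G2 D2 k, [/\ TS (foldl (@step F) psi s) G1 D1 G2 D2, (0 < k)%N,
    (i * g1 + j * d1 = k * (G1 + D1))%N & (i * g2 + j * d2 = k * (G2 + D2))%N].
Proof.
elim: N => [|N IH] i j hN hi hj psi g1 d1 g2 d2 HT; first lia.
have [lij|lji|eij] := ltngtP i j.
- have [||s [G1 [D1 [G2 [D2 [k [HT' hk e1 e2]]]]]]] :=
    IH i (j - i)%N _ hi _ _ _ _ _ _ (TS_T0 HT); [lia|lia|].
  exists (Some 0 :: s), G1, D1, G2, D2, k; split => //.
  + by rewrite -e1 mulnDr -addnA -mulnDl subnKC // ltnW.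
  + by rewrite -e2 mulnDr -addnA -mulnDl subnKC // ltnW.
- have [||s [G1 [D1 [G2 [D2 [k [HT' hk e1 e2]]]]]]] :=
    IH (i - j)%N j _ _ hj _ _ _ _ _ (TS_Ti HT); [lia|lia|].
  exists (None :: s), G1, D1, G2, D2, k; split => //.
  + by rewrite -e1 mulnDr addnA -mulnDl subnK // ltnW.
  + by rewrite -e2 mulnDr addnA -mulnDl subnK // ltnW.
- exists [::], g1, d1, g2, d2, i; split => //; rewrite -eij mulnDr //.
Qed.

Variable R : realType.
Variable lam : R.
Hypotheses (hl0 : 0 < lam) (hl1 : lam <= 1).
Local Notation gf := (@gf m n R lam).

Lemma ld_TS s G1 D1 G2 D2 : TS (chart (0, 0) s) G1 D1 G2 D2 ->
  ld (fmn F m n) lam (0, 0) s = gf G1 G2.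
Proof.
case=> a [b [[U1 [U2 [U [[h1 h2 hj [u1 u2 u]] _]]]] ea eb ed]].
have -> : ld (fmn F m n) lam (0, 0) s = 1 + (ordx (jac (chart (0, 0) s)))%:R -
   lam * (ordx (eval2 (fmn F m n) (chart (0, 0) s).1 (chart (0, 0) s).2))%:R by [].
rewrite hj ordx_monoE // h1 h2 ordx_f_unm //; last first.
  rewrite -negb_and; apply/negP => /andP [/eqP x /eqP y].
  exact: det_unmatched hm hn ed x y.
by rewrite lam_minn // /gf -ea natrD [1 + _]addrC.
Qed.

Lemma gf_scale k H1 H2 : gf (k * H1) (k * H2) = k%:R * gf H1 H2.
Proof.
rewrite /gf -mulnDr natrM mulnCA [(n * (k * H2))%N]mulnCA !natrM !(mulrCA lam).
by rewrite -minr_pMr ?ler0n // mulrBr.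
Qed.

End Reach.

Unset Implicit Arguments.
Local Open Scope classical_set_scope.

Theorem mainTheorem13 (F : closedFieldType) (R : realType) (m n : nat) (lam : R) :
  [pchar F] =i pred0 ->
  (0 < m)%N -> (0 < n)%N -> 0 < lam -> lam <= 1 ->
  lc_pair (fmn F m n) lam ->
  mld0 (fmn F m n) lam =
  ereal_inf [set ((p.1 + p.2)%:R
                   - Num.min (lam * (m * p.1)%:R) (lam * (n * p.2)%:R))%:E
            | p in [set p : nat * nat | (0 < p.1)%N /\ (0 < p.2)%N]].
Proof.
move=> h0 hm hn hl0 hl1 [lc _].
rewrite /mld0; apply/eqP; rewrite eq_le; apply/andP; split.
- apply/ereal_infP => y [p [hp1 hp2] <-].
  have [s [G1 [D1 [G2 [D2 [k [HT hk e1 e2]]]]]]] :=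
    reach hm hn (leqnn (p.1 + p.2)) hp1 hp2 (@TS_start F m n).
  have HTc : TS m n (chart (0, 0) s) (G1 + D1) D1 (G2 + D2) D2.
    by rewrite chart_step /centre_coords; exact (TS_T0 hm hn HT).
  have eld := ld_TS hm hn hl0 HTc.
  apply: (@le_trans _ _ (ld (fmn F m n) lam (0, 0) s)%:E).
    by apply: ereal_inf_lbound; exists s.
  rewrite lee_fin eld.
  have -> : p = (k * (G1 + D1), k * (G2 + D2))%N.
    by case: p hp1 hp2 e1 e2 => p1 p2 /= _ _; rewrite !muln1 !muln0 addn0 add0n => <- <-.
  have := gf_scale m n lam k (G1 + D1) (G2 + D2); rewrite /gf /= => ->.
  apply: ler_peMl; last by rewrite ler1n.
  by rewrite -/(gf m n lam _ _) -eld; exact: lc.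
- apply/ereal_infP => y [s _ <-].
  have [G1 [G2 [g1p g2p hg]]] := ld_ge hm hn h0 hl0 hl1 s.
  apply: (@le_trans _ _ (gf m n lam G1 G2)%:E); last by rewrite lee_fin.
  by apply: ereal_inf_lbound; exists (G1, G2).
Qed.
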